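(* Let $\mathbb K$ be a field with $2\in\mathbb K^\times$, $A$ a unital commutative associative $\mathbb K$-algebra, $\mathfrak k$ a $\mathbb K$-Lie algebra and $\mathfrak g=A\otimes\mathfrak k$. For $a,b,c\in A$ and $x,y,z\in\mathfrak k$, $$p_1(\partial(ax\wedge by\wedge cz))\equiv p_1(abc\,x\wedge[y,z])\equiv-p_2(\partial(ax\wedge by\wedge cz))\mod B_2(\mathfrak g).$$ In particular $(p_1+p_2)(B_2(\mathfrak g))\subseteq B_2(\mathfrak g)$.
   Context: $\mathfrak g$ has bracket $[a\otimes x,a'\otimes x']=aa'\otimes[x,x']$, $ax=a\otimes x$, unit $\mathbf 1$. $v\wedge w=\tfrac12(v\otimes w-w\otimes v)$, $v\vee w=\tfrac12(v\otimes w+w\otimes v)$. $\partial:\Lambda^3(\mathfrak g)\to\Lambda^2(\mathfrak g)$, $u\wedge v\wedge w\mapsto[u,v]\wedge w+[v,w]\wedge u+[w,u]\wedge v$, and $B_2(\mathfrak g)=\mathrm{im}\,\partial$. $I_A$ is the kernel of multiplication $S^2(A)\to A$. The subspaces $\Lambda^2(A)\otimes S^2(\mathfrak k)$, $A\otimes\Lambda^2(\mathfrak k)$, $I_A\otimes\Lambda^2(\mathfrak k)$ are regarded as subspaces of $\Lambda^2(\mathfrak g)$ via $a\wedge b\otimes x\vee y\mapsto\tfrac12(ax\wedge by+ay\wedge bx)$, $a\otimes x\wedge y\mapsto\tfrac12(ax\wedge\mathbf 1y-ay\wedge\mathbf 1x)$, $a\vee b\otimes x\wedge y\mapsto\tfrac12(ax\wedge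 by-ay\wedge bx)$; then $\Lambda^2(\mathfrak g)$ is their direct sum and $p_1,p_2,p_3$ are the corresponding projections, given by $p_1(ax\wedge by)=a\wedge b\otimes x\vee y$, $p_2(ax\wedge by)=ab\otimes x\wedge y$, $p_3(ax\wedge by)=(a\vee b-ab\vee\mathbf 1)\otimes x\wedge y$. *)

(* Defs.v *)
From HB Require Import structures.
From mathcomp Require Import all_boot all_algebra.
Set Implicit Arguments. Unset Strict Implicit. Unset Printing Implicit Defensive.
Import GRing.Theory.
Local Open Scope ring_scope.

Section Defs.
Variable K : fieldType.

Definition bilinear_map (U V W : lmodType K) (f : U -> V -> W) : Prop :=
  (forall v, linear (fun u => f u v)) /\ (forall u, linear (f u)).

Definition lie_bracket (L : lmodType K) (br : L -> L -> L) : Prop :=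
  [/\ bilinear_map br, (forall x, br x x = 0) &
      (forall x y z, br x (br y z) + br y (br z x) + br z (br x y) = 0)].

Definition is_tensor_product (U V T : lmodType K) (t : U -> V -> T) : Prop :=
  [/\ bilinear_map t,
      (forall v : T, exists s : seq (U * V), v = \sum_(p <- s) t p.1 p.2) &
      (forall (W : lmodType K) (f : U -> V -> W), bilinear_map f ->
         exists h : T -> W, linear h /\ forall u v, h (t u v) = f u v)].

Definition is_exterior_square (V E : lmodType K) (w : V -> V -> E) : Prop :=
  [/\ bilinear_map w, (forall v, w v v = 0),
      (forall e : E, exists s : seq (V * V), e = \sum_(p <- s) w p.1 p.2) &
      (forall (W : lmodType K) (f : V -> V -> W), bilinear_map f ->
         (forall v, f v v = 0) ->
         exists h : E -> W, linear h /\ forall u v, h (w u v) = f u v)].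

Definition bdry (g E : lmodType K) (br : g -> g -> g) (w : g -> g -> E)
  (u v z : g) : E :=
  w (br u v) z + w (br v z) u + w (br z u) v.

(* B_2(g) = im d ; every element of Lambda^3 is a sum of pure wedges *)
Definition B2 (g E : lmodType K) (br : g -> g -> g) (w : g -> g -> E)
  (e : E) : Prop :=
  exists s : seq (g * g * g), e = \sum_(p <- s) bdry br w p.1.1 p.1.2 p.2.

End Defs.

(* Main.v *)
Require Import Defs.
From HB Require Import structures.
From mathcomp Require Import all_boot all_algebra.
From mathcomp Require Import ring.
Import GRing.Theory.
Local Open Scope ring_scope.

Inductive rexpr (K : Type) :=
 | RAtom of nat | RZero | RAdd of rexpr K & rexpr K | ROpp of rexpr K
 | RScale of K & rexpr K.

Section Refl.
Variables (K : fieldType) (V : lmodType K) (s : seq V).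

Fixpoint reval (e : rexpr K) : V :=
  match e with
  | RAtom i => nth 0 s i
  | RZero => 0
  | RAdd a b => reval a + reval b
  | ROpp a => - reval a
  | RScale c a => c *: reval a
  end.

Fixpoint rnorm (e : rexpr K) : {poly K} :=
  match e with
  | RAtom i => 'X^i
  | RZero => 0
  | RAdd a b => rnorm a + rnorm b
  | ROpp a => - rnorm a
  | RScale c a => c%:P * rnorm a
  end.

Definition phi (p : {poly K}) : V := \sum_(i < size s) p`_i *: nth 0 s i.

Lemma phiD p q : phi (p + q) = phi p + phi q.
Proof. by rewrite /phi -big_split; apply: eq_bigr => i _; rewrite coefD scalerDl. Qed.
Lemma phiN p : phi (- p) = - phi p.
Proof. by rewrite /phi -sumrN; apply: eq_bigr => i _; rewrite coefN scaleNr. Qed.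
Lemma phiZ c p : phi (c%:P * p) = c *: phi p.
Proof. by rewrite /phi scaler_sumr; apply: eq_bigr => i _; rewrite coefCM scalerA. Qed.
Lemma phi0 : phi 0 = 0.
Proof. by rewrite /phi big1 // => i _; rewrite coef0 scale0r. Qed.
Lemma phiX i : phi 'X^i = nth 0 s i.
Proof.
rewrite /phi; case: (ltnP i (size s)) => hi.
  rewrite (bigD1 (Ordinal hi)) //= coefXn eqxx scale1r big1 ?addr0 //.
  move=> j /eqP hj; rewrite coefXn; case: eqP => [hij|]; last by rewrite scale0r.
  by case: hj; apply: val_inj.
rewrite nth_default // big1 // => j _; rewrite coefXn.
case: eqP => [hij|]; last by rewrite scale0r.
by move: (ltn_ord j); rewrite hij ltnNge hi.
Qed.

Lemma reval_phi e : reval e = phi (rnorm e).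
Proof.
elim: e => [i||a IHa b IHb|a IHa|c a IHa] /=.
- by rewrite phiX.
- by rewrite phi0.
- by rewrite phiD IHa IHb.
- by rewrite phiN IHa.
- by rewrite phiZ IHa.
Qed.

Lemma reflect_eq e1 e2 : rnorm e1 = rnorm e2 -> reval e1 = reval e2.
Proof. by rewrite !reval_phi => ->. Qed.
End Refl.

Ltac memb x l :=
  lazymatch l with
  | nil => constr:(false)
  | x :: _ => constr:(true)
  | _ :: ?l' => memb x l'
  end.

Ltac idx x l :=
  lazymatch l with
  | x :: _ => constr:(0%N)
  | _ :: ?l' => let n := idx x l' in constr:(n.+1)
  end.

Ltac collect e l :=
  lazymatch e with
  | ?a + ?b => let l1 := collect a l in collect b l1
  | - ?a => collect a l
  | ?c *: ?a => collect a l
  | 0 => l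
  | _ => let b := memb e l in
         lazymatch b with true => l | false => constr:(e :: l) end
  end.

Ltac reify K e l :=
  lazymatch e with
  | ?a + ?b => let ra := reify K a l in let rb := reify K b l in constr:(@RAdd K ra rb)
  | - ?a => let ra := reify K a l in constr:(@ROpp K ra)
  | ?c *: ?a => let ra := reify K a l in constr:(@RScale K c ra)
  | 0 => constr:(@RZero K)
  | _ => let i := idx e l in constr:(@RAtom K i)
  end.

Ltac lmod_eq K :=
  match goal with |- ?x = ?y =>
    let T := type of x in
    let l := collect x (@nil T) in
    let l := collect y l in
    let ex := reify K x l in
    let ey := reify K y l in
    change (@reval _ _ l ex = @reval _ _ l ey); apply: reflect_eq; rewrite /=; ring
  end.


Section Lin.
Variables (K : fieldType) (U V : lmodType K) (f : U -> V).
Hypothesis hf : linear f.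
Lemma linD' u v : f (u + v) = f u + f v.
Proof. by have := hf 1 u v; rewrite !scale1r. Qed.
Lemma lin0' : f 0 = 0.
Proof.
have := hf 1 0 0; rewrite !scale1r addr0 => H.
by apply: (addrI (f 0)); rewrite addr0 -H.
Qed.
Lemma linZ' c u : f (c *: u) = c *: f u.
Proof. by have := hf c u 0; rewrite !addr0 lin0' addr0. Qed.
Lemma linN' u : f (- u) = - f u.
Proof. by rewrite -scaleN1r linZ' scaleN1r. Qed.
End Lin.
Arguments linD' {K U V f}.
Arguments lin0' {K U V f}.
Arguments linZ' {K U V f}.
Arguments linN' {K U V f}.

Theorem lemma2p2 (K : fieldType) (A : comAlgType K) (k g L2 : lmodType K)
  (brk : k -> k -> k) (t : A -> k -> g) (brg : g -> g -> g)
  (w : g -> g -> L2) (p1 p2 : L2 -> L2) :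
  (2%:R : K) != 0 ->
  lie_bracket brk ->
  is_tensor_product t ->
  bilinear_map brg ->
  (forall a b x y, brg (t a x) (t b y) = t (a * b) (brk x y)) ->
  is_exterior_square w ->
  linear p1 ->
  (forall a b x y, p1 (w (t a x) (t b y)) =
     (2%:R : K)^-1 *: (w (t a x) (t b y) + w (t a y) (t b x))) ->
  linear p2 ->
  (forall a b x y, p2 (w (t a x) (t b y)) =
     (2%:R : K)^-1 *: (w (t (a * b) x) (t 1 y) - w (t (a * b) y) (t 1 x))) ->
  (forall (a b c : A) (x y z : k),
     B2 brg w (p1 (bdry brg w (t a x) (t b y) (t c z))
               - p1 (w (t (a * b * c) x) (t 1 (brk y z))))
     /\
     B2 brg w (p1 (w (t (a * b * c) x) (t 1 (brk y z)))
               + p2 (bdry brg w (t a x) (t b y) (t c z))))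
  /\ (forall e : L2, B2 brg w e -> B2 brg w (p1 e + p2 e)).
Proof.
move=> h2 [[brkL brkR] brk0 _] [[tL tR] tspan _] [brgL brgR] hbr
  [[wL wR] w0 _ _] hp1L hp1 hp2L hp2.
have wN u v : w u v = - w v u.
  apply/eqP; rewrite -subr_eq0 opprK.
  have := w0 (u + v); rewrite (linD' (wL _)) !(linD' (wR _)) !w0 add0r addr0.
  by move=> ->.
have brkN x y : brk x y = - brk y x.
  apply/eqP; rewrite -subr_eq0 opprK.
  have := brk0 (x + y); rewrite (linD' (brkL _)) !(linD' (brkR _)) !brk0 add0r addr0.
  by move=> ->.
have tN a x : t a (- x) = - t a x by rewrite (linN' (tR _)).
have wNl u v : w (- u) v = - w u v by rewrite (linN' (wL _)).
have wNr u v : w u (- v) = - w u v by rewrite (linN' (wR _)).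
have B2_0 : B2 brg w 0 by exists [::]; rewrite big_nil.
have B2D e1 e2 : B2 brg w e1 -> B2 brg w e2 -> B2 brg w (e1 + e2).
  by move=> [s1 ->] [s2 ->]; exists (s1 ++ s2); rewrite big_cat.
have bdryZ c u v z : bdry brg w (c *: u) v z = c *: bdry brg w u v z.
  rewrite /bdry !(linZ' (brgL _)) !(linZ' (brgR _)) !(linZ' (wL _)).
  by rewrite !(linZ' (wR _)) !scalerDr.
have B2Z c e : B2 brg w e -> B2 brg w (c *: e).
  move=> [s ->]; exists [seq (c *: p.1.1, p.1.2, p.2) | p <- s].
  rewrite big_map scaler_sumr; apply: eq_bigr => p _ /=; by rewrite bdryZ.
have B2b u v z : B2 brg w (bdry brg w u v z).
  by exists [:: (u, v, z)]; rewrite big_seq1.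
have part2 a b c x y z : B2 brg w (p1 (w (t (a * b * c) x) (t 1 (brk y z)))
               + p2 (bdry brg w (t a x) (t b y) (t c z))).
  have m1 : b * c * a = a * b * c by ring.
  have m2 : c * a * b = a * b * c by ring.
  have -> : p1 (w (t (a * b * c) x) (t 1 (brk y z)))
               + p2 (bdry brg w (t a x) (t b y) (t c z)) =
    (2%:R : K)^-1 *: bdry brg w (t 1 x) (t (a * b * c) y) (t 1 z) +
    (2%:R : K)^-1 *: bdry brg w (t 1 x) (t 1 y) (t (a * b * c) z).
    rewrite /bdry !hbr ?(linD' hp1L) ?(linD' hp2L) !hp1 !hp2 ?mul1r ?mulr1 ?m1 ?m2.
    rewrite ?(wN (t _ (brk _ _))) ?(brkN y x) ?(brkN z y) ?(brkN x z).
    rewrite ?tN ?wNl ?wNr.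
    lmod_eq K.
  by apply B2D; apply B2Z; apply B2b.
have part1 a b c x y z : B2 brg w (p1 (bdry brg w (t a x) (t b y) (t c z))
               - p1 (w (t (a * b * c) x) (t 1 (brk y z)))).
  have m1 : b * c * a = a * b * c by ring.
  have m2 : c * a * b = a * b * c by ring.
  have -> : p1 (bdry brg w (t a x) (t b y) (t c z))
               - p1 (w (t (a * b * c) x) (t 1 (brk y z))) =
    (2%:R : K)^-1 *: bdry brg w (t (a * b * c) x) (t 1 y) (t 1 z) +
    (2%:R : K)^-1 *: bdry brg w (t a x) (t b y) (t c z) +
    (- (2%:R : K)^-1) *: bdry brg w (t (b * c) x) (t a y) (t 1 z) +
    (2%:R : K)^-1 *: bdry brg w (t c x) (t a y) (t b z) +
    (- (2%:R : K)^-1) *: bdry brg w (t 1 x) (t (c * a) y) (t b z) +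
    (- (2%:R : K)^-1) *: bdry brg w (t c x) (t 1 y) (t (a * b) z).
    rewrite /bdry !hbr ?(linD' hp1L) ?(linN' hp1L) !hp1 ?mul1r ?mulr1 ?m1 ?m2.
    rewrite ?(wN (t _ (brk _ _))) ?(brkN y x) ?(brkN z y) ?(brkN x z).
    rewrite ?tN ?wNl ?wNr.
    lmod_eq K.
  have Bs c' u v z' : B2 brg w (c' *: bdry brg w u v z') by apply B2Z; apply B2b.
  apply B2D; last exact: Bs.
  apply B2D; last exact: Bs.
  apply B2D; last exact: Bs.
  apply B2D; last exact: Bs.
  apply B2D; exact: Bs.
have bdryC u v z : bdry brg w u v z = bdry brg w v z u by rewrite /bdry; lmod_eq K.
have bdryD u1 u2 v z : bdry brg w (u1 + u2) v z = bdry brg w u1 v z + bdry brg w u2 v z.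
  rewrite /bdry !(linD' (brgL _)) !(linD' (brgR _)) !(linD' (wL _)) !(linD' (wR _)).
  lmod_eq K.
have bdry0 v z : bdry brg w 0 v z = 0 by have := bdryZ 0 0 v z; rewrite !scale0r.
have g_ind (Q : g -> Prop) : Q 0 -> (forall u v, Q u -> Q v -> Q (u + v)) ->
    (forall a x, Q (t a x)) -> forall u, Q u.
  move=> Q0 QD Qt u; have [s ->] := tspan u; elim: s => [|p s IH].
    by rewrite big_nil.
  by rewrite big_cons; apply QD; [apply Qt | exact IH].
pose F u v z := p1 (bdry brg w u v z) + p2 (bdry brg w u v z).
have FD u1 u2 v z : F (u1 + u2) v z = F u1 v z + F u2 v z.
  by rewrite /F bdryD (linD' hp1L) (linD' hp2L); lmod_eq K.
have F0 v z : F 0 v z = 0 by rewrite /F bdry0 (lin0' hp1L) (lin0' hp2L) addr0.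
have FC u v z : F u v z = F v z u by rewrite /F bdryC.
have Fpure a x b y c z : B2 brg w (F (t a x) (t b y) (t c z)).
  have -> : F (t a x) (t b y) (t c z) =
     (p1 (bdry brg w (t a x) (t b y) (t c z))
               - p1 (w (t (a * b * c) x) (t 1 (brk y z)))) +
     (p1 (w (t (a * b * c) x) (t 1 (brk y z)))
               + p2 (bdry brg w (t a x) (t b y) (t c z))).
    by rewrite /F; lmod_eq K.
  by apply B2D; [apply part1 | apply part2].
have Fall u v z : B2 brg w (F u v z).
  move: u v z; apply (g_ind (fun u => forall v z, B2 brg w (F u v z))).
  - by move=> v z; rewrite F0.
  - by move=> u1 u2 H1 H2 v z; rewrite FD; apply B2D.
  move=> a x; apply (g_ind (fun v => forall z, B2 brg w (F (t a x) v z))).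
  - by move=> z; rewrite FC F0.
  - by move=> v1 v2 H1 H2 z; rewrite FC FD; apply B2D; rewrite -FC.
  move=> b y; apply (g_ind (fun z => B2 brg w (F (t a x) (t b y) z))).
  - by rewrite -FC F0.
  - by move=> z1 z2 H1 H2; rewrite -FC FD; apply B2D; rewrite FC.
  by move=> c z; apply Fpure.
split.
  by move=> a b c x y z; split; [apply part1 | apply part2].
move=> e [s ->]; elim: s => [|p s IH].
  by rewrite big_nil (lin0' hp1L) (lin0' hp2L) addr0.
rewrite big_cons (linD' hp1L) (linD' hp2L) addrACA.
by apply B2D; [apply Fall | exact IH].
Qed.
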